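(* Let $(G,\mathcal{P}_G)$ be a pinned graph and let $(H,\mathcal{P}_H)$ be a pinned subgraph of it. If $(G,\mathcal{P}_G)$ is $k$-admissible, then $(H,\mathcal{P}_H)$ is $k$-admissible.
   Context: A pinned graph $(G,\mathcal{P})$ is a finite simple graph $G=(\mathcal{V},\mathcal{E})$ together with a set $\mathcal{P}\subset\mathcal{V}$ of pinned vertices, no two of which are adjacent; $m=|\mathcal{P}|$. $(H,\mathcal{P}_H)$ is a pinned subgraph of $(G,\mathcal{P}_G)$ if $H$ is an induced subgraph of $G$ and $\mathcal{P}_H\subset\mathcal{P}_G$ (with $\mathcal{P}_H$ a set of vertices of $H$). A construction order is an ordering $v_1,\dots,v_l$ of $\mathcal{V}$ whose first $m$ entries are exactly the pinned vertices; for $i>m$ the back-degree of $v_i$ is the number of vertices among $v_1,\dots,v_{i-1}$ adjacent to $v_i$. $(G,\mathcal{P})$ is $k$-admissible ($k\ge0$ integer) if some construction order has all back-degrees (for $i>m$) at most $k$. *)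

(* Defs.v *)
From mathcomp Require Import all_boot.
Set Implicit Arguments. Unset Strict Implicit. Unset Printing Implicit Defensive.

(* A finite simple graph: vertex set V : {set T} inside a finite type T,
   adjacency e : rel T, symmetric and irreflexive (edges of the graph on V are
   the pairs of vertices of V related by e). *)
Definition simple_rel (T : finType) (e : rel T) : Prop :=
  symmetric e /\ irreflexive e.

Definition pinned_graph (T : finType) (e : rel T) (V P : {set T}) : Prop :=
  simple_rel e /\ P \subset V /\ {in P &, forall x y, ~~ e x y}.

(* (W, P_H) is a pinned subgraph of (V, P_G): the induced subgraph on W
   (same adjacency restricted to W), with P_H a subset of P_G and of W. *)
Definition pinned_subgraph (T : finType) (W PH V PG : {set T}) : Prop :=
  W \subset V /\ PH \subset PG /\ PH \subset W.

Definition construction_order (T : finType) (V P : {set T}) (s : seq T) : Prop :=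
  uniq s /\ (forall x, (x \in s) = (x \in V)) /\
  [set x in take #|P| s] = P.

Definition back_degree (T : finType) (e : rel T) (s : seq T) (x0 : T) (i : nat) : nat :=
  count (e (nth x0 s i)) (take i s).

Definition k_admissible (T : finType) (e : rel T) (V P : {set T}) (k : nat) : Prop :=
  exists s : seq T, construction_order V P s /\
    forall x0 i, #|P| <= i < size s -> back_degree e s x0 i <= k.

(* Main.v *)
Require Import Defs.
From mathcomp Require Import all_boot.

Lemma take_mid (T : eqType) (s1 s2 : seq T) (x : T) n :
  x \notin s1 -> (x \in take n (s1 ++ x :: s2)) = (size s1 < n).
Proof.
move=> xs1; rewrite take_cat.
case: ltnP => [lt|le].
  have -> : (size s1 < n) = false by apply/negbTE; rewrite -leqNgt ltnW.
  by apply/negbTE/negP => /mem_take; rewrite (negbTE xs1).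
rewrite mem_cat (negbTE xs1) /=.
case En: (n - size s1) => [|n'] /=.
  by move/eqP: En; rewrite subn_eq0 => H; apply/esym/negbTE; rewrite -leqNgt.
by rewrite inE eqxx /=; apply/esym; rewrite -subn_gt0 En.
Qed.

Lemma take_mid2 (T : eqType) (s1 s2 : seq T) (x y : T) n :
  y \in take n (s1 ++ x :: s2) -> (y \in s1) || (size s1 < n).
Proof.
rewrite take_cat; case: ltnP => [lt|le]; first by move/mem_take ->.
rewrite mem_cat; case/orP => [->//|].
case En: (n - size s1) => [|n'] //=.
by move=> _; rewrite -subn_gt0 En orbT.
Qed.

Lemma take_mid3 (T : eqType) (s1 s2 : seq T) (x : T) n :
  size s1 < n -> {subset s1 <= take n (s1 ++ x :: s2)}.
Proof.
by move=> lt y ys; rewrite take_cat ltnNge ltnW //= mem_cat ys.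
Qed.

Theorem lemma4p2 (T : finType) (e : rel T) (V PG W PH : {set T}) (k : nat) :
  pinned_graph e V PG ->
  pinned_subgraph W PH V PG ->
  k_admissible e V PG k ->
  k_admissible e W PH k.
Proof.
move=> [[esym eirr] [PGV PGind]] [WV [PHPG PHW]] [s [[us [ms ts]] Hs]].
set a := [seq y <- s | y \in PH].
set QW := [pred y | (y \in W) && (y \notin PH)].
set b := [seq y <- s | QW y].
have ma : forall y, (y \in a) = (y \in PH).
  move=> y; rewrite mem_filter ms; case yP: (y \in PH) => //=.
  by apply: (subsetP WV); apply: (subsetP PHW).
have ua : uniq a by apply: filter_uniq.
have ub : uniq b by apply: filter_uniq.
have sa : size a = #|PH|.
  by rewrite -(card_uniqP ua); apply: eq_card => y; rewrite ma.
have PGs : forall y, y \in PG -> y \in take #|PG| s.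
  by move=> y; rewrite -{1}ts inE.
have sPG : forall y, y \in take #|PG| s -> y \in PG.
  by move=> y yt; rewrite -ts inE.
exists (a ++ b); split.
  split.
    rewrite cat_uniq ua ub andbT /=; apply/hasPn => y.
    by rewrite mem_filter /= ma => /andP [/andP [_ ->]].
  split.
    move=> y; rewrite mem_cat ma mem_filter /= ms.
    case yP: (y \in PH) => /=; first by rewrite (subsetP PHW).
    by case yW: (y \in W) => //=; rewrite (subsetP WV).
  by rewrite -sa take_size_cat //; apply/setP => y; rewrite inE ma.
move=> x0 i /andP [Hi1 Hi2].
rewrite /back_degree take_cat nth_cat sa ltnNge Hi1 /=.
rewrite size_cat sa in Hi2.
set m := i - #|PH|.
have mb : m < size b by rewrite /m ltn_subLR.
set x := nth x0 b m.
have xb : x \in b by apply: mem_nth.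
have [xs QWx] : x \in s /\ QW x by move: xb; rewrite mem_filter => /andP [].
move: QWx; rewrite /= => /andP [xW xPH].
have im : index x b = m by apply: index_uniq.
have [s1 [s2 Es]] : exists s1 s2, s = s1 ++ x :: s2.
  by case/splitPr: xs => s1 s2; exists s1, s2.
rewrite Es in us Hs ts PGs sPG.
have xs1 : x \notin s1.
  by move: us; rewrite cat_uniq /= => /and3P [_ /norP [/negP ? _] _]; apply/negP => ?; auto.
have eb : b = [seq y <- s1 | QW y] ++ x :: [seq y <- s2 | QW y].
  by rewrite /b Es filter_cat /= xW xPH.
have em : m = size [seq y <- s1 | QW y].
  rewrite -im eb index_cat.
  have -> : (x \in [seq y <- s1 | QW y]) = false.
    by rewrite mem_filter (negbTE xs1) andbF.
  by rewrite /= eqxx addn0.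
have -> : take m b = [seq y <- s1 | QW y] by rewrite eb em take_size_cat.
have utk : uniq (a ++ [seq y <- s1 | QW y]).
  rewrite cat_uniq ua filter_uniq /=; last first.
    by move: us; rewrite cat_uniq => /andP [].
  rewrite andbT; apply/hasPn => y; rewrite mem_filter /= ma => /andP [/andP [_ ->]] //.
case xPG: (x \in PG).
  have lt : size s1 < #|PG| by rewrite -(@take_mid _ _ s2 _ #|PG| xs1); apply: PGs.
  rewrite (@eq_in_count _ _ pred0); first by rewrite count_pred0.
  move=> y; rewrite mem_cat ma mem_filter => yin /=.
  have yPG : y \in PG.
    case/orP: yin => [/(subsetP PHPG) //|/andP [_ ys1]].
    by apply: sPG; apply: (@take_mid3 _ _ _ _ _ lt).
  by apply/negbTE; apply: PGind.
have le : #|PG| <= size s1.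
  by rewrite leqNgt -(@take_mid _ _ s2 _ #|PG| xs1); apply/negP => /sPG; rewrite xPG.
have := Hs x0 (size s1).
rewrite /back_degree size_cat /= le addnS ltnS leq_addr /= nth_cat ltnn subnn /=.
rewrite take_size_cat // => Hk.
apply: leq_trans (Hk isT).
rewrite -!size_filter; apply: uniq_leq_size; first by apply: filter_uniq.
move=> y; rewrite !mem_filter => /andP [-> /=]; rewrite mem_cat ma.
case/orP => [/(subsetP PHPG) yPG|]; last by rewrite mem_filter => /andP [].
by have := @take_mid2 _ _ _ _ _ _ (PGs _ yPG); rewrite ltnNge le orbF.
Qed.
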